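(* Let $A$ be a meet-complemented lattice in which $\Box x$ and $\Diamond x$ exist for every $x\in A$. Suppose that for every $a\in A$ the infimum $\bigwedge\{\Box^n a: n\in\mathbb{N}\}$ exists in $A$ (where $\Box^0 a=a$). Then for every $a\in A$, the set $\{b\in A: b\le a \text{ and } b\vee\neg b=1\}$ has a maximum $Ba$, and $Ba=\bigwedge\{\Box^n a: n\in\mathbb{N}\}$.
   Context: A meet-complemented lattice is a lattice $(L,\le)$ (not necessarily distributive) such that for every $a\in L$ the element $\neg a=\max\{b\in L: a\wedge b\le c\ \text{for all } c\in L\}$ exists; it is bounded with bottom $0$ and top $1$. For $a\in L$, $\Box a=\max\{b\in L: a\vee\neg b=1\}$ and $\Diamond a=\min\{b\in L: \neg a\vee b=1\}$. $\mathbb{N}$ includes $0$. $Ba$ denotes the greatest Boolean element (element $b$ with $b\vee\neg b=1$) below $a$. *)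

(* Defs.v *)
From HB Require Import structures.
From mathcomp Require Import all_boot all_order.
Set Implicit Arguments. Unset Strict Implicit. Unset Printing Implicit Defensive.
Import Order.TTheory.
Local Open Scope order_scope.

Definition is_greatest (d : Order.disp_t) (T : porderType d) (P : T -> Prop) (m : T) : Prop :=
  P m /\ forall b, P b -> b <= m.

Definition is_least (d : Order.disp_t) (T : porderType d) (P : T -> Prop) (m : T) : Prop :=
  P m /\ forall b, P b -> m <= b.

Definition is_inf (d : Order.disp_t) (T : porderType d) (P : T -> Prop) (m : T) : Prop :=
  is_greatest (fun l => forall x, P x -> l <= x) m.

Definition meet_complement (d : Order.disp_t) (T : tbLatticeType d) (neg : T -> T) : Prop :=
  forall a, is_greatest (fun b => forall c, a `&` b <= c) (neg a).

Definition is_box (d : Order.disp_t) (T : tbLatticeType d) (neg box : T -> T) : Prop :=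
  forall a, is_greatest (fun b => a `|` neg b = \top) (box a).

Definition is_dia (d : Order.disp_t) (T : tbLatticeType d) (neg dia : T -> T) : Prop :=
  forall a, is_least (fun b => neg a `|` b = \top) (dia a).

(* Main.v *)
Require Import Defs.
From HB Require Import structures.
From mathcomp Require Import all_boot all_order.
Import Order.TTheory.
Local Open Scope order_scope.

Theorem proposition12 (d : Order.disp_t) (A : tbLatticeType d)
  (neg box dia : A -> A)
  (hneg : meet_complement neg) (hbox : is_box neg box) (hdia : is_dia neg dia)
  (hinf : forall a : A, exists m : A, is_inf (fun x => exists n : nat, x = iter n box a) m) :
  forall a : A, exists Ba : A,
    is_greatest (fun b => b <= a /\ b `|` neg b = \top) Ba /\
    is_inf (fun x => exists n : nat, x = iter n box a) Ba.
Proof.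
have topU : forall u v w : A, w <= u -> w `|` v = \top -> u `|` v = \top.
  move=> u v w wu H; apply/eqP; rewrite eq_le lex1 /= -H.
  by apply: leU2.
have negA : forall x y : A, x <= y -> neg y <= neg x.
  move=> x y xy; apply: (hneg x).2 => c.
  apply: le_trans (leI2 xy (lexx (neg y))) _; exact: (hneg y).1.
have boxP : forall x y : A, x <= box y <-> y `|` neg x = \top.
  move=> x y; split; last by move=> H; exact: (hbox y).2.
  move=> xy; rewrite joinC; apply: (topU _ _ (neg (box y))); first exact: negA.
  by rewrite joinC; exact: (hbox y).1.
have diaP : forall x y : A, dia x <= y <-> neg x `|` y = \top.
  move=> x y; split; last by move=> H; exact: (hdia x).2.
  move=> xy; rewrite joinC; apply: (topU _ _ (dia x)) => //.
  by rewrite joinC; exact: (hdia x).1.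
have adj : forall x y : A, dia x <= y <-> x <= box y.
  move=> x y; split.
    by move/diaP; rewrite joinC => /boxP.
  by move/boxP; rewrite joinC => /diaP.
move=> a; have [m [mlb mgr]] := hinf a.
exists m; split; last by split.
split.
- split; first by apply: mlb; exists 0%N.
  have : m <= box m.
    apply/adj; apply: mgr => x [n ->]; apply/adj; rewrite -iterS.
    by apply: mlb; exists n.+1.
  move/boxP; rewrite joinC.
  by [].
- move=> b [ba bb]; apply: mgr => x [n ->]; elim: n => [|n IH] //=.
  apply/boxP; rewrite joinC in bb; rewrite joinC.
  by rewrite joinC; apply: (topU _ _ b) => //; rewrite joinC.
Qed.
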